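(* Let $\Bbbk$ be an algebraically closed field of characteristic zero, let $p_0=0\le p_1\le\dots\le p_{m+n}$ be integers, and let $\Upsilon=(|1|,\dots,|m+n|)$ be a sequence consisting of $m$ zeros and $n$ ones. Given $a_i^{(r)}\in\Bbbk$ for $1\le i\le m+n$ and $1\le r\le p_i-p_{i-1}$, there exist $b_{i,j}\in\Bbbk$ for $1\le i\le m+n$, $1\le j\le p_i$, such that $$b_{i,p_i-p_{i-1}+r}=b_{i-1,r}\quad\text{for }1\le r\le p_{i-1},$$ $$e_r\big((-1)^{|i|}b_{i,1},\dots,(-1)^{|i|}b_{i,p_i}\big)=(-1)^{r|i|}a_i^{(r)}\quad\text{for }1\le r\le p_i-p_{i-1},$$ where $e_r$ denotes the $r$-th elementary symmetric polynomial. *)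

(* Defs.v *)
From HB Require Import structures.
From mathcomp Require Import all_boot all_order all_algebra.
Set Implicit Arguments. Unset Strict Implicit. Unset Printing Implicit Defensive.
Import Order.TTheory GRing.Theory Num.Theory.
Local Open Scope ring_scope.

Definition elsym (R : comNzRingType) (r : nat) (s : seq R) : R :=
  \sum_(I : {set 'I_(size s)} | #|I| == r) \prod_(i in I) s`_i.

(* Main.v *)
Require Import Defs.
From HB Require Import structures.
From mathcomp Require Import all_boot all_order all_algebra.
From mathcomp Require Import zify.
Import GRing.Theory.
Local Open Scope ring_scope.

Section S.
Variable k : fieldType.

Definition Pp (s : seq k) : {poly k} := \prod_(z <- s) ('X + z%:P).

Lemma elsym_coef (s : seq k) r : (r <= size s)%N -> elsym r s = (Pp s)`_(size s - r).
Proof.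
move=> hr; rewrite /Pp (big_nth 0) big_mkord.
under eq_bigr => i _ do rewrite addrC.
rewrite bigA_distr coef_sum /elsym big_mkcond /=.
apply: eq_bigr => J _.
have -> : \prod_(i < size s) (if i \in J then (s`_i)%:P else 'X)
   = (\prod_(i in J) s`_i)%:P * 'X^(size s - #|J|).
  rewrite (bigID (mem J)) /=.
  under eq_bigr => i hi do rewrite hi.
  under [X in _ * X]eq_bigr => i hi do rewrite (negbTE hi).
  rewrite prodr_const rmorph_prod; congr (_ * _).
  congr ('X ^+ _).
  have -> : #|(fun i : 'I_(size s) => i \notin J)| = #|~: J|.
    by apply: eq_card => i; rewrite in_setC.
  by rewrite cardsCs setCK card_ord.
rewrite coefCM coefXn.
have hJ : (#|J| <= size s)%N by have := cardsC J; rewrite card_ord; lia.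
have -> : (size s - r == size s - #|J|)%N = (#|J| == r).
  by apply/eqP/eqP; lia.
by case: eqP => _; rewrite ?mulr1 ?mulr0.
Qed.

Lemma PpE (s : seq k) : Pp s = \prod_(z <- map -%R s) ('X - z%:P).
Proof. by rewrite /Pp big_map; apply: eq_bigr => z _; rewrite polyCN opprK. Qed.

Lemma Pp_monic s : Pp s \is monic.
Proof. by rewrite PpE monic_prod_XsubC. Qed.

Lemma Pp_size s : size (Pp s) = (size s).+1.
Proof. by rewrite PpE size_prod_XsubC size_map. Qed.

Lemma Pp_cat s1 s2 : Pp (s1 ++ s2) = Pp s1 * Pp s2.
Proof. by rewrite /Pp big_cat. Qed.
End S.
Arguments Pp {k} s.

Lemma Pp_split (k : closedFieldType) (Q : {poly k}) d :
  Q \is monic -> size Q = d.+1 -> exists x : seq k, size x = d /\ Pp x = Q.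
Proof.
move=> hm hs; have [rs hrs] := closed_field_poly_normal Q.
rewrite (monicP hm) scale1r in hrs.
exists (map -%R rs); split.
  apply: succn_inj; rewrite -hs hrs size_prod_XsubC.
  by rewrite size_map.
rewrite PpE -map_comp map_id_in; first by rewrite hrs.
by move=> z _ /=; rewrite opprK.
Qed.

Lemma key (k : closedFieldType) (c : seq k) (d : nat) (t : nat -> k) :
  exists x : seq k, size x = d /\
    forall r, (1 <= r <= d)%N -> elsym r (x ++ c) = t r.
Proof.
set N := (d + size c)%N.
have hN : N = (d + size c)%N by [].
clearbody N.
pose T : {poly k} := \poly_(i < N.+1) (if i == N then 1 else if (N - d <= i)%N then t (N - i)%N else 0).
pose Pc := Pp c.
have hPc : Pc \is monic by apply: Pp_monic.
have hPc0 : Pc != 0 by apply: monic_neq0.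
have hT : size T = N.+1 by rewrite size_poly_eq //= eqxx oner_neq0.
have hR : (size (modp T Pc) < size Pc)%N by rewrite ltn_modp.
have hsPc : size Pc = (size c).+1 by apply: Pp_size.
have hQP : divp T Pc * Pc = T - modp T Pc by rewrite {2}(divp_eq T Pc) addrK.
have hsR : (size (- (modp T Pc)) < size T)%N.
  by rewrite size_polyN hT; apply: (leq_trans hR); rewrite hsPc hN ltnS leq_addl.
have hQPm : divp T Pc * Pc \is monic.
  rewrite hQP; apply/monicP; rewrite lead_coefDl // lead_coefE hT /= coef_poly ltnSn eqxx //.
have hQm : divp T Pc \is monic by rewrite -(monicMr _ hPc).
have hsQ : size (divp T Pc) = d.+1.
  have := size_Mmonic (monic_neq0 hQm) hPc.
  rewrite hQP size_polyDl // hT hsPc => h.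
  have hq : (0 < size (divp T Pc))%N by rewrite size_poly_gt0 monic_neq0.
  rewrite addnS /= hN -addSn in h; exact/esym/(addIn h).
have [x [hx hxQ]] := @Pp_split _ _ _ hQm hsQ.
exists x; split => // r /andP[hr1 hrd].
have hs : size (x ++ c) = N by rewrite size_cat hx hN.
rewrite (@elsym_coef _ (x ++ c) r) hs; last by lia.
rewrite Pp_cat hxQ hQP coefB [X in _ - X]nth_default; last first.
  move: hR; rewrite hsPc ltnS => h; apply: (leq_trans h); lia.
rewrite subr0 coef_poly.
have -> : (N - r < N.+1)%N by lia.
have -> : (N - r == N)%N = false by apply/eqP; lia.
have -> : (N - d <= N - r)%N by lia.
congr (t _); lia.
Qed.

Lemma keyb (k : closedFieldType) (c : seq k) (d : nat) (t : nat -> k) :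
  exists x : seq k, (size x == d) && all (fun r => elsym r (x ++ c) == t r) (iota 1 d).
Proof.
have [x [hx h]] := key k c d t; exists x; rewrite hx eqxx /=.
apply/allP => r; rewrite mem_iota => hr; apply/eqP/h; move: hr; rewrite add1n ltnS.
by [].
Qed.

Lemma keyb_spec (k : closedFieldType) (c : seq k) (d : nat) (t : nat -> k) (x : seq k) :
  (size x == d) && all (fun r => elsym r (x ++ c) == t r) (iota 1 d) ->
  size x = d /\ forall r, (1 <= r <= d)%N -> elsym r (x ++ c) = t r.
Proof.
case/andP => /eqP hx /allP h; split => // r hr; apply/eqP/h.
by rewrite mem_iota add1n ltnS.
Qed.

Lemma sgK (k : comNzRingType) (n : nat) (z : k) : (-1) ^+ n * ((-1) ^+ n * z) = z.
Proof. by rewrite mulrA -exprMn mulrNN mulr1 expr1n mul1r. Qed.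

Lemma map_iota_nth (k : comNzRingType) (f : k -> k) (s : seq k) :
  [seq f s`_j.-1 | j <- iota 1 (size s)] = map f s.
Proof.
rewrite -[in RHS](mkseq_nth 0 s) /mkseq -map_comp (iotaDl 1 0) -map_comp.
by apply: eq_map => j /=.
Qed.

Fixpoint rows (k : closedFieldType) (p : nat -> nat) (ups : nat -> bool)
  (a : nat -> nat -> k) (i : nat) : seq k :=
  match i with
  | 0 => [::]
  | i'.+1 =>
    let prev := rows k p ups a i' in
    let s : k := (-1) ^+ ups i'.+1 in
    map (fun z => s * z)
      (xchoose (@keyb k (map (fun z => s * z) prev) (p i'.+1 - p i')%N
                    (fun r => (-1) ^+ (r * ups i'.+1)%N * a i'.+1 r))) ++ prev
  end.
Arguments rows {k}.

Theorem mainTheorem8 (k : closedFieldType) (hchar : [pchar k] =i pred0)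
  (m n : nat) (p : nat -> nat) (hp0 : p 0%N = 0%N)
  (hpmono : forall i : nat, (1 <= i <= m + n)%N -> (p i.-1 <= p i)%N)
  (ups : nat -> bool)
  (hups : (\sum_(1 <= i < (m + n).+1) (ups i : nat))%N = n)
  (a : nat -> nat -> k) :
  exists b : nat -> nat -> k,
    (forall i : nat, (1 <= i <= m + n)%N ->
       forall r : nat, (1 <= r <= p i.-1)%N ->
         b i ((p i - p i.-1) + r)%N = b i.-1 r) /\
    (forall i : nat, (1 <= i <= m + n)%N ->
       forall r : nat, (1 <= r <= p i - p i.-1)%N ->
         elsym r [seq (-1) ^+ ups i * b i j | j <- iota 1 (p i)]
           = (-1) ^+ (r * ups i)%N * a i r).
Proof.
pose X i := xchoose (@keyb k (map (fun z => (-1) ^+ ups i.+1 * z) (rows p ups a i)) (p i.+1 - p i)%N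
                    (fun r => (-1) ^+ (r * ups i.+1)%N * a i.+1 r)).
have hX i := @keyb_spec _ _ _ _ _ (xchooseP (@keyb k (map (fun z => (-1) ^+ ups i.+1 * z) (rows p ups a i)) (p i.+1 - p i)%N
                    (fun r => (-1) ^+ (r * ups i.+1)%N * a i.+1 r))).
have hrows i : rows p ups a i.+1 = map (fun z => (-1) ^+ ups i.+1 * z) (X i) ++ rows p ups a i by [].
have hsize i : (i <= m + n)%N -> size (rows p ups a i) = p i.
  elim: i => [|i IH] hi; first by rewrite hp0.
  rewrite hrows size_cat size_map (proj1 (hX i)) IH; last by apply: ltnW.
  by rewrite subnK // (hpmono i.+1) // hi.
exists (fun i j => (rows p ups a i)`_j.-1); split.
  case=> [//|i] /andP[_ hi] r /andP[hr1 hr2].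
  rewrite hrows nth_cat size_map (proj1 (hX i)).
  have -> : ((p i.+1 - p i + r).-1 < p i.+1 - p i)%N = false.
    by apply/negbTE; rewrite -leqNgt -subn1 -addnBA // leq_addr.
  by congr nth; rewrite -subn1 -addnBA // addKn subn1.
case=> [//|i] /andP[_ hi] r hr.
rewrite -(hsize i.+1 hi) map_iota_nth hrows map_cat -map_comp.
under eq_map => z do rewrite /= sgK.
by rewrite map_id (proj2 (hX i)).
Qed.
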